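(* Consider the $n$-body problem in ${\bf S}^2$ with all masses equal. If $n$ is odd, the configuration in which the bodies are placed at the vertices of a regular $n$-gon inscribed in any great circle of ${\bf S}^2$ is a fixed point of the equations of motion. For $n=4$, the configuration in which the bodies are at the vertices of a regular tetrahedron inscribed in ${\bf S}^2$ (e.g. $(0,0,1)$, $(0,2\sqrt2/3,-1/3)$, $(-2/\sqrt6,-\sqrt2/3,-1/3)$, $(2/\sqrt6,-\sqrt2/3,-1/3)$) is also a fixed point.
   Context: The $n$-body problem in ${\bf S}^2$: bodies of masses $m_1,\dots,m_n>0$ have positions ${\bf q}_i=(x_i,y_i,z_i)\in\mathbb R^3$ on the unit sphere ${\bf S}^2=\{{\bf q}:{\bf q}\cdot{\bf q}=1\}$ ($\cdot$ the Euclidean inner product), and satisfy $$\ddot{\bf q}_i=\sum_{j\ne i}\frac{m_j[{\bf q}_j-({\bf q}_i\cdot{\bf q}_j){\bf q}_i]}{[1-({\bf q}_i\cdot{\bf q}_j)^2]^{3/2}}-(\dot{\bf q}_i\cdot\dot{\bf q}_i){\bf q}_i,\qquad {\bf q}_i\cdot{\bf q}_i=1,\ \ {\bf q}_i\cdot\dot{\bf q}_i=0,$$ $i=1,\dots,n$, defined only for configurations with $({\bf q}_i\cdot{\bf q}_j)^2\ne 1$ for all $i\ne j$. A fixed point is a configuration ${\bf q}^0$ (satisfying this nonsingularity condition) such that the constant function ${\bf q}(t)\equiv{\bf q}^0$ solves the equations, equivalently $\sum_{j\ne i}m_j[{\bf q}_j-({\bf q}_i\cdot{\bf q}_j){\bf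 q}_i]/[1-({\bf q}_i\cdot{\bf q}_j)^2]^{3/2}=0$ for every $i$. *)

(* Defs.v *)
From Stdlib Require Import Reals Lra.
Open Scope R_scope.

Record vec3 : Type := V3 { vx : R; vy : R; vz : R }.

Definition dot (a b : vec3) : R := vx a * vx b + vy a * vy b + vz a * vz b.
Definition vadd (a b : vec3) : vec3 := V3 (vx a + vx b) (vy a + vy b) (vz a + vz b).
Definition vsub (a b : vec3) : vec3 := V3 (vx a - vx b) (vy a - vy b) (vz a - vz b).
Definition vscale (c : R) (a : vec3) : vec3 := V3 (c * vx a) (c * vy a) (c * vz a).
Definition vzero : vec3 := V3 0 0 0.

(* A configuration of n bodies: q i for i < n (values for i >= n are ignored). *)
Definition config := nat -> vec3.

Definition nonsingular (n : nat) (q : config) : Prop :=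
  forall i j, (i < n)%nat -> (j < n)%nat -> i <> j -> (dot (q i) (q j))^2 <> 1.

Definition on_sphere (n : nat) (q : config) : Prop :=
  forall i, (i < n)%nat -> dot (q i) (q i) = 1.

(* Term of body j acting on body i:
   m_j [q_j - (q_i.q_j) q_i] / [1 - (q_i.q_j)^2]^(3/2),
   with x^(3/2) written as (sqrt x)^3. *)
Definition pair_term (m : nat -> R) (q : config) (i j : nat) : vec3 :=
  let d := dot (q i) (q j) in
  vscale (m j / (sqrt (1 - d^2))^3) (vsub (q j) (vscale d (q i))).

Fixpoint force_upto (m : nat -> R) (q : config) (i k : nat) : vec3 :=
  match k with
  | O => vzero
  | S k' => if Nat.eq_dec k' i then force_upto m q i k'
            else vadd (force_upto m q i k') (pair_term m q i k')
  end.

Definition force (n : nat) (m : nat -> R) (q : config) (i : nat) : vec3 :=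
  force_upto m q i n.

Definition fixed_point (n : nat) (m : nat -> R) (q : config) : Prop :=
  on_sphere n q /\ nonsingular n q /\
  forall i, (i < n)%nat -> force n m q i = vzero.

Definition regular_ngon (n : nat) (u v : vec3) : config :=
  fun k => vadd (vscale (cos (2 * PI * INR k / INR n)) u)
                (vscale (sin (2 * PI * INR k / INR n)) v).

(* Regular tetrahedron inscribed in S^2: four unit vectors, pairwise
   inner product -1/3 (edge length sqrt(8/3), centre at the origin). *)
Definition regular_tetrahedron (q : config) : Prop :=
  on_sphere 4 q /\
  forall i j, (i < 4)%nat -> (j < 4)%nat -> i <> j -> dot (q i) (q j) = -1/3.

(* Main.v *)
Require Import Defs.
From Stdlib Require Import Reals.
From Stdlib Require Import Lra Lia Psatz ZArith.
Open Scope R_scope.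

Lemma vec_eq a b : vx a = vx b -> vy a = vy b -> vz a = vz b -> a = b.
Proof. destruct a, b; simpl; intros; subst; reflexivity. Qed.

Fixpoint sumr (f : nat -> R) (k : nat) : R :=
  match k with O => 0 | S k' => sumr f k' + f k' end.

Lemma sumr_ext f g k : (forall j, (j < k)%nat -> f j = g j) -> sumr f k = sumr g k.
Proof.
  induction k; simpl; intros H; auto.
  rewrite IHk by (intros; apply H; lia). rewrite H by lia. auto.
Qed.

Lemma sumr_split f a b : sumr f (a + b) = sumr f a + sumr (fun j => f (a + j)%nat) b.
Proof.
  induction b; simpl. rewrite Nat.add_0_r; ring.
  rewrite Nat.add_succ_r; simpl. rewrite IHb; ring.
Qed.

Lemma sumr_opp f k : sumr (fun j => - f j) k = - sumr f k.
Proof. induction k; simpl. ring. rewrite IHk; ring. Qed.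

Lemma sumr_rev f k : sumr f k = sumr (fun j => f (k - 1 - j)%nat) k.
Proof.
  induction k. simpl; ring.
  transitivity (sumr (fun j => f (S k - 1 - j)%nat) (1 + k)); [|reflexivity].
  rewrite sumr_split. simpl (sumr _ 1). simpl sumr at 1.
  rewrite IHk.
  replace (S k - 1 - 0)%nat with k by lia.
  rewrite (sumr_ext (fun j => f (S k - 1 - (1 + j))%nat) (fun j => f (k - 1 - j)%nat)).
  replace (k - 0 - 0)%nat with k by lia. ring. intros; f_equal; lia.
Qed.

Fixpoint skipsum (f : nat -> R) (i k : nat) : R :=
  match k with O => 0 | S k' => if Nat.eq_dec k' i then skipsum f i k' else skipsum f i k' + f k' end.

Lemma skipsum_low f i k : (k <= i)%nat -> skipsum f i k = sumr f k.
Proof.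
  induction k; simpl; intros; auto.
  destruct (Nat.eq_dec k i). lia. rewrite IHk by lia. auto.
Qed.

Lemma skipsum_high f i p : skipsum f i (i + 1 + p) = sumr f i + sumr (fun j => f (i+1+j)%nat) p.
Proof.
  induction p.
  - replace (i+1+0)%nat with (S i) by lia. simpl.
    destruct (Nat.eq_dec i i); [|lia]. rewrite skipsum_low by lia. ring.
  - replace (i+1+S p)%nat with (S (i+1+p)) by lia. simpl.
    destruct (Nat.eq_dec (i+1+p) i); [lia|]. rewrite IHp. ring.
Qed.

Lemma skipsum_split f i n : (i < n)%nat ->
  skipsum f i n = sumr f i + sumr (fun j => f (i+1+j)%nat) (n-1-i).
Proof. intros. replace n with (i+1+(n-1-i))%nat at 1 by lia. apply skipsum_high. Qed.

Lemma vadd_vscale a b e : vadd (vscale a e) (vscale b e) = vscale (a+b) e.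
Proof. apply vec_eq; simpl; ring. Qed.

Lemma force_upto_eq m q i e g :
  (forall j, j <> i -> pair_term m q i j = vscale (g j) e) ->
  forall k, force_upto m q i k = vscale (skipsum g i k) e.
Proof.
  intros H k; induction k; simpl.
  - apply vec_eq; simpl; ring.
  - destruct (Nat.eq_dec k i). auto. rewrite IHk, H by auto. apply vadd_vscale.
Qed.

Lemma dot_comb a b c d u v :
  dot (vadd (vscale a u) (vscale b v)) (vadd (vscale c u) (vscale d v)) =
  a*c*dot u u + (a*d+b*c)*dot u v + b*d*dot v v.
Proof. unfold dot, vadd, vscale; simpl; ring. Qed.

Lemma sc2 x : sin x ^ 2 + cos x ^ 2 = 1.
Proof. rewrite <- !Rsqr_pow2. apply sin2_cos2. Qed.

Section NGon.
Variable n : nat.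
Hypothesis npos : (0 < n)%nat.
Definition nR := INR n.
Definition hh (x : R) := sin (2*PI*x/nR) / (Rabs (sin (2*PI*x/nR)))^3.

Lemma nR_pos : 0 < nR.
Proof. unfold nR. apply lt_0_INR. auto. Qed.

Lemma hh_per x : hh (x + nR) = hh x.
Proof.
  unfold hh. replace (2*PI*(x+nR)/nR) with (2*PI*x/nR + 2*PI).
  rewrite sin_plus, sin_2PI, cos_2PI. f_equal; [|f_equal;f_equal]; ring.
  field. pose proof nR_pos; lra.
Qed.

Lemma hh_neg x : hh (- x) = - hh x.
Proof.
  unfold hh. replace (2*PI*-x/nR) with (-(2*PI*x/nR)) by (unfold Rdiv; ring).
  rewrite sin_neg, Rabs_Ropp. unfold Rdiv; ring.
Qed.

Lemma total_zero (g : nat -> R) m i : (i < n)%nat ->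
  (forall j, g j = m * hh (INR j - INR i)) -> skipsum g i n = 0.
Proof.
  intros Hi Hg. rewrite skipsum_split by auto.
  set (G := fun j => m * hh (INR (1 + j))).
  assert (E1 : sumr (fun j => g (i+1+j)%nat) (n-1-i) = sumr G (n-1-i)).
  { apply sumr_ext; intros j _. rewrite Hg. unfold G. do 2 f_equal.
    assert (INR (i+1+j) = INR i + INR (1+j)) by (rewrite <- plus_INR; f_equal; lia). lra. }
  assert (E2 : sumr g i = sumr (fun j => G (n-1-i+j)%nat) i).
  { apply sumr_ext; intros j Hj. rewrite Hg. unfold G. f_equal.
    rewrite <- hh_per. f_equal.
    assert (INR (1 + (n-1-i+j)) + INR i = nR + INR j) by
      (unfold nR; rewrite <- !plus_INR; f_equal; lia). lra. }
  rewrite E1, E2, Rplus_comm, <- sumr_split.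
  replace (n-1-i+i)%nat with (n-1)%nat by lia.
  assert (Hs : sumr G (n-1) = - sumr G (n-1)).
  { rewrite sumr_rev at 1. rewrite <- sumr_opp. apply sumr_ext. intros j Hj.
    unfold G. rewrite Ropp_mult_distr_r, <- hh_neg, <- (hh_per (- INR (1+j))). f_equal. f_equal.
    assert (INR (1 + (n-1-1-j)) + INR (1+j) = nR).
    { unfold nR; rewrite <- !plus_INR. apply f_equal. lia. } lra. }
  lra.
Qed.

End NGon.

Lemma ngon_part (n : nat) (m : R) (u v : vec3) :
      Nat.Odd n -> 0 < m ->
      dot u u = 1 -> dot v v = 1 -> dot u v = 0 ->
      fixed_point n (fun _ => m) (regular_ngon n u v).
Proof.
  intros Hodd Hm Hu Hv Huv.
  assert (npos : (0 < n)%nat) by (destruct Hodd; lia).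
  pose proof (nR_pos n npos) as HnR. unfold nR in HnR.
  set (a := fun k => 2 * PI * INR k / INR n).
  assert (Hdot : forall i j, dot (regular_ngon n u v i) (regular_ngon n u v j)
                             = cos (2*PI*(INR j - INR i)/INR n)).
  { intros i j. unfold regular_ngon. rewrite dot_comb, Hu, Hv, Huv.
    replace (2*PI*(INR j - INR i)/INR n) with
      (2 * PI * INR j / INR n - 2 * PI * INR i / INR n) by (field; lra).
    rewrite cos_minus. ring. }
  split; [|split].
  - intros i _. rewrite Hdot. replace (INR i - INR i) with 0 by ring.
    replace (2*PI*0/INR n) with 0 by (field; lra). rewrite cos_0. ring.
  - intros i j Hi Hj Hij. rewrite Hdot. intro H.
    set (x := 2 * PI * (INR j - INR i) / INR n) in *.
    assert (Hs : sin x = 0).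
    { pose proof (sc2 x). nra. }
    destruct (sin_eq_0_0 x Hs) as [k Hk]. unfold x in Hk.
    assert (H2 : 2 * (INR j - INR i) = IZR k * INR n).
    { pose proof PI_RGT_0.
      apply (Rmult_eq_reg_l (PI / INR n)); [|apply Rgt_not_eq; apply Rdiv_lt_0_compat; lra].
      replace (PI / INR n * (2 * (INR j - INR i))) with (2 * PI * (INR j - INR i) / INR n)
        by (field; lra). rewrite Hk. field. lra. }
    rewrite !INR_IZR_INZ in H2. rewrite <- minus_IZR, <- mult_IZR, <- mult_IZR in H2.
    apply eq_IZR in H2. destruct Hodd as [p Hp].
    assert (Z.of_nat n = 2 * Z.of_nat p + 1)%Z by lia.
    assert (Z.of_nat i <> Z.of_nat j) by lia.
    assert (Hb : (-2 < k < 2)%Z) by nia.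
    assert (k = -1 \/ k = 0 \/ k = 1)%Z as [->|[->| ->]] by lia; lia.
  - intros i Hi. unfold force.
    set (q := regular_ngon n u v).
    set (e := vadd (vscale (- sin (a i)) u) (vscale (cos (a i)) v)).
    set (g := fun j => m * hh n (INR j - INR i)).
    rewrite (force_upto_eq _ _ _ e g).
    + rewrite (total_zero n npos g m i Hi) by reflexivity.
      apply vec_eq; simpl; ring.
    + intros j Hj. unfold pair_term. cbv zeta. unfold q. rewrite Hdot.
      set (x := 2 * PI * (INR j - INR i) / INR n).
      assert (Hx : x = a j - a i) by (unfold x, a; field; lra).
      assert (Hsq : sqrt (1 - cos x ^ 2) = Rabs (sin x)).
      { rewrite <- sqrt_Rsqr_abs. f_equal. rewrite Rsqr_pow2. pose proof (sc2 x). lra. }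
      rewrite Hsq.
      assert (Hv2 : vsub (regular_ngon n u v j) (vscale (cos x) (regular_ngon n u v i))
                    = vscale (sin x) e).
      { rewrite Hx, cos_minus, sin_minus. unfold e, regular_ngon. fold (a i) (a j).
        pose proof (sc2 (a i)) as H1.
        apply vec_eq; simpl; apply Rminus_diag_uniq.
        - transitivity ((1 - sin (a i)^2 - cos (a i)^2)*(cos (a j) * vx u + sin (a j) * vx v)).
          ring. replace (1 - sin (a i)^2 - cos (a i)^2) with 0 by lra. ring.
        - transitivity ((1 - sin (a i)^2 - cos (a i)^2)*(cos (a j) * vy u + sin (a j) * vy v)).
          ring. replace (1 - sin (a i)^2 - cos (a i)^2) with 0 by lra. ring.
        - transitivity ((1 - sin (a i)^2 - cos (a i)^2)*(cos (a j) * vz u + sin (a j) * vz v)).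
          ring. replace (1 - sin (a i)^2 - cos (a i)^2) with 0 by lra. ring. }
      rewrite Hv2. unfold g, hh, nR. fold x. apply vec_eq; simpl; unfold Rdiv; ring.
Qed.

Lemma tetra_part (m : R) (q : config) :
      0 < m -> regular_tetrahedron q -> fixed_point 4 (fun _ => m) q.
Proof.
  intros Hm [Hs Hd].
  set (c := m / (sqrt (1 - (-1/3)^2))^3).
  assert (Hpt : forall i j, (i < 4)%nat -> (j < 4)%nat -> i <> j ->
            pair_term (fun _ => m) q i j = vscale c (vsub (q j) (vscale (-1/3) (q i)))).
  { intros i j Hi Hj Hij. unfold pair_term. cbv zeta. rewrite Hd by auto. reflexivity. }
  assert (H2 : forall i j, (i < 4)%nat -> (j < 4)%nat -> i <> j -> dot (q i) (q j) = -1/3) by auto.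
  assert (Hsum : (vx (q 0%nat) + vx (q 1%nat) + vx (q 2%nat) + vx (q 3%nat))^2 +
                 (vy (q 0%nat) + vy (q 1%nat) + vy (q 2%nat) + vy (q 3%nat))^2 +
                 (vz (q 0%nat) + vz (q 1%nat) + vz (q 2%nat) + vz (q 3%nat))^2 = 0).
  { transitivity (dot (q 0%nat) (q 0%nat) + dot (q 1%nat) (q 1%nat) + dot (q 2%nat) (q 2%nat) + dot (q 3%nat) (q 3%nat)
      + 2 * (dot (q 0%nat) (q 1%nat) + dot (q 0%nat) (q 2%nat) + dot (q 0%nat) (q 3%nat) + dot (q 1%nat) (q 2%nat)
             + dot (q 1%nat) (q 3%nat) + dot (q 2%nat) (q 3%nat))).
    unfold dot; ring.
    rewrite !Hs, !H2 by lia. lra. }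
  assert (Hx : vx (q 0%nat) + vx (q 1%nat) + vx (q 2%nat) + vx (q 3%nat) = 0).
  { apply Rsqr_0_uniq; rewrite Rsqr_pow2. pose proof (pow2_ge_0 (vx (q 0%nat) + vx (q 1%nat) + vx (q 2%nat) + vx (q 3%nat))). pose proof (pow2_ge_0 (vy (q 0%nat) + vy (q 1%nat) + vy (q 2%nat) + vy (q 3%nat))). pose proof (pow2_ge_0 (vz (q 0%nat) + vz (q 1%nat) + vz (q 2%nat) + vz (q 3%nat))). lra. }
  assert (Hy : vy (q 0%nat) + vy (q 1%nat) + vy (q 2%nat) + vy (q 3%nat) = 0).
  { apply Rsqr_0_uniq; rewrite Rsqr_pow2. pose proof (pow2_ge_0 (vx (q 0%nat) + vx (q 1%nat) + vx (q 2%nat) + vx (q 3%nat))). pose proof (pow2_ge_0 (vy (q 0%nat) + vy (q 1%nat) + vy (q 2%nat) + vy (q 3%nat))). pose proof (pow2_ge_0 (vz (q 0%nat) + vz (q 1%nat) + vz (q 2%nat) + vz (q 3%nat))). lra. }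
  assert (Hz : vz (q 0%nat) + vz (q 1%nat) + vz (q 2%nat) + vz (q 3%nat) = 0).
  { apply Rsqr_0_uniq; rewrite Rsqr_pow2. pose proof (pow2_ge_0 (vx (q 0%nat) + vx (q 1%nat) + vx (q 2%nat) + vx (q 3%nat))). pose proof (pow2_ge_0 (vy (q 0%nat) + vy (q 1%nat) + vy (q 2%nat) + vy (q 3%nat))). pose proof (pow2_ge_0 (vz (q 0%nat) + vz (q 1%nat) + vz (q 2%nat) + vz (q 3%nat))). lra. }
  split; [exact Hs|split].
  - intros i j Hi Hj Hij. rewrite Hd by auto. lra.
  - intros i Hi. unfold force.
    destruct i as [|[|[|[|i]]]]; [| | | |lia]; simpl force_upto;
    repeat match goal with |- context [Nat.eq_dec ?a ?b] =>
      destruct (Nat.eq_dec a b); [try (exfalso; lia) | try (exfalso; lia)] end;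
    rewrite !Hpt by lia;
    (apply vec_eq; simpl;
    [ transitivity (c * (vx (q 0%nat) + vx (q 1%nat) + vx (q 2%nat) + vx (q 3%nat))); [field | rewrite Hx; ring]
    | transitivity (c * (vy (q 0%nat) + vy (q 1%nat) + vy (q 2%nat) + vy (q 3%nat))); [field | rewrite Hy; ring]
    | transitivity (c * (vz (q 0%nat) + vz (q 1%nat) + vz (q 2%nat) + vz (q 3%nat))); [field | rewrite Hz; ring] ]).
Qed.

Theorem mainTheorem3 :
  (forall (n : nat) (m : R) (u v : vec3),
      Nat.Odd n -> 0 < m ->
      dot u u = 1 -> dot v v = 1 -> dot u v = 0 ->
      fixed_point n (fun _ => m) (regular_ngon n u v))
  /\
  (forall (m : R) (q : config),
      0 < m -> regular_tetrahedron q ->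
      fixed_point 4 (fun _ => m) q).
Proof. split; [exact ngon_part | exact tetra_part]. Qed.
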